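(* Let $X,Y$ be standard coarse spaces and $f\colon X\to Y$ a standard map that is proper and bornological with respect to the induced prebornologies. Then ${}^*f$ maps $\mathrm{INF}(X)$ into $\mathrm{INF}(Y)$, and: $f$ is bornologous if and only if ${}^*f\colon\partial_SX\to\partial_SY$ is bornologous; and $f$ is effectively proper if and only if ${}^*f\colon\partial_SX\to\partial_SY$ is effectively proper.
   Context: Nonstandard framework with transfer and sufficient saturation. Coarse structure $\mathcal{C}_X$: family of subsets of $X\times X$ containing the diagonal, closed under subsets, finite unions, inverses, compositions. Induced prebornology $\mathcal{B}_X=\{B: B\times B\in\mathcal{C}_X\}$; $\mathrm{FIN}(X)=\bigcup_{B\in\mathcal{B}_X}{}^*B$, $\mathrm{INF}(X)={}^*X\setminus\mathrm{FIN}(X)$. $S^cX$ is ${}^*X$ with coarse structure $\{E\subseteq{}^*X\times{}^*X: E\subseteq{}^*F\text{ for some }F\in\mathcal{C}_X\}$; the S-corona $\partial_SX$ is $\mathrm{INF}(X)$ with the restricted coarse structure $\{E\cap(\mathrm{INF}(X)\times\mathrm{INF}(X))\}$. A map $g$ between coarse spaces is bornologous if $(g\times g)(E)$ is controlled for all controlled $E$, effectively proper if $(g^{-1}\times g^{-1})(E)$ is controlled for all controlled $E$. Proper/bornological: preimages/images of bounded sets are bounded. *)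

(* Defs.v *)
(* Nonstandard framework modelled as an ultrapower X^I / U. *)
From Stdlib Require Import List.
Set Implicit Arguments.

Definition subset {T : Type} (A B : T -> Prop) : Prop := forall x, A x -> B x.

Definition diag (X : Type) : X * X -> Prop := fun p => fst p = snd p.
Definition inv_rel {X : Type} (E : X * X -> Prop) : X * X -> Prop :=
  fun p => E (snd p, fst p).
Definition comp_rel {X : Type} (E F : X * X -> Prop) : X * X -> Prop :=
  fun p => exists z, E (fst p, z) /\ F (z, snd p).

Record coarse_structure (X : Type) (C : (X * X -> Prop) -> Prop) : Prop := {
  cs_diag  : C (@diag X);
  cs_sub   : forall E F, C E -> subset F E -> C F;
  cs_union : forall E F, C E -> C F -> C (fun p => E p \/ F p);
  cs_inv   : forall E, C E -> C (inv_rel E);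
  cs_comp  : forall E F, C E -> C F -> C (comp_rel E F) }.

Definition bounded {X : Type} (C : (X * X -> Prop) -> Prop) (B : X -> Prop) : Prop :=
  C (fun p => B (fst p) /\ B (snd p)).

Definition image2 {X Y : Type} (f : X -> Y) (E : X * X -> Prop) : Y * Y -> Prop :=
  fun q => exists p, E p /\ q = (f (fst p), f (snd p)).

Definition bornologous {X Y : Type} (CX : (X * X -> Prop) -> Prop)
  (CY : (Y * Y -> Prop) -> Prop) (f : X -> Y) : Prop :=
  forall E, CX E -> CY (image2 f E).

Definition eff_proper {X Y : Type} (CX : (X * X -> Prop) -> Prop)
  (CY : (Y * Y -> Prop) -> Prop) (f : X -> Y) : Prop :=
  forall E, CY E -> CX (fun p => E (f (fst p), f (snd p))).

Definition proper_map {X Y : Type} (CX : (X * X -> Prop) -> Prop)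
  (CY : (Y * Y -> Prop) -> Prop) (f : X -> Y) : Prop :=
  forall B, bounded CY B -> bounded CX (fun x => B (f x)).

Definition bornological {X Y : Type} (CX : (X * X -> Prop) -> Prop)
  (CY : (Y * Y -> Prop) -> Prop) (f : X -> Y) : Prop :=
  forall B, bounded CX B -> bounded CY (fun y => exists x, B x /\ y = f x).

Record ultrafilter (I : Type) (U : (I -> Prop) -> Prop) : Prop := {
  uf_full   : U (fun _ => True);
  uf_proper : ~ U (fun _ => False);
  uf_up     : forall A B, U A -> subset A B -> U B;
  uf_inter  : forall A B, U A -> U B -> U (fun i => A i /\ B i);
  uf_ultra  : forall A, U A \/ U (fun i => ~ A i) }.

(* Saturation for families of internal sets indexed by sets of cardinality
   at most |K|: an internal subset of *T is given by a sequence
   (A i)_{i in I} of subsets of T; x in [A] iff {i | A i (x i)} in U. *)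
Definition saturated_for (I : Type) (U : (I -> Prop) -> Prop) (K : Type) : Prop :=
  forall (T J : Type) (g : J -> K), (forall a b, g a = g b -> a = b) ->
  forall A : J -> I -> T -> Prop,
    (forall l : list J, exists x : I -> T,
        forall j, In j l -> U (fun i => A j i (x i))) ->
    exists x : I -> T, forall j, U (fun i => A j i (x i)).

(* nonstandard extensions (points of *X are represented by sequences I -> X) *)
Definition star {I X : Type} (U : (I -> Prop) -> Prop) (A : X -> Prop) :
  (I -> X) -> Prop := fun x => U (fun i => A (x i)).

Definition starR {I X : Type} (U : (I -> Prop) -> Prop) (F : X * X -> Prop) :
  (I -> X) * (I -> X) -> Prop :=
  fun p => U (fun i => F (fst p i, snd p i)).

Definition starf {I X Y : Type} (f : X -> Y) (x : I -> X) : I -> Y :=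
  fun i => f (x i).

Definition FIN {I X : Type} (U : (I -> Prop) -> Prop) (CX : (X * X -> Prop) -> Prop)
  (x : I -> X) : Prop :=
  exists B, bounded CX B /\ star U B x.

Definition INF {I X : Type} (U : (I -> Prop) -> Prop) (CX : (X * X -> Prop) -> Prop)
  (x : I -> X) : Prop := ~ FIN U CX x.

Definition ScX_controlled {I X : Type} (U : (I -> Prop) -> Prop)
  (CX : (X * X -> Prop) -> Prop) (E : (I -> X) * (I -> X) -> Prop) : Prop :=
  exists F, CX F /\ subset E (starR U F).

Definition corona_controlled {I X : Type} (U : (I -> Prop) -> Prop)
  (CX : (X * X -> Prop) -> Prop) (G : (I -> X) * (I -> X) -> Prop) : Prop :=
  exists E, ScX_controlled U CX E /\
    forall p, G p <-> (E p /\ INF U CX (fst p) /\ INF U CX (snd p)).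

Definition corona_bornologous {I X Y : Type} (U : (I -> Prop) -> Prop)
  (CX : (X * X -> Prop) -> Prop) (CY : (Y * Y -> Prop) -> Prop) (f : X -> Y) : Prop :=
  forall E, corona_controlled U CX E ->
    corona_controlled U CY (image2 (starf f) E).

Definition corona_eff_proper {I X Y : Type} (U : (I -> Prop) -> Prop)
  (CX : (X * X -> Prop) -> Prop) (CY : (Y * Y -> Prop) -> Prop) (f : X -> Y) : Prop :=
  forall E, corona_controlled U CY E ->
    corona_controlled U CX
      (fun p => INF U CX (fst p) /\ INF U CX (snd p) /\
                E (starf f (fst p), starf f (snd p))).

(* Main.v *)
Require Import Defs.
From Stdlib Require Import List Classical.

Definition Nb {Z} (B : Z -> Prop) (R : Z*Z->Prop) : Z -> Prop :=
  fun x => exists b, B b /\ (x = b \/ R (b,x)).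
Definition img {Z W} (f : Z -> W) (B : Z -> Prop) : W -> Prop :=
  fun y => exists x, B x /\ y = f x.
Definition sq {Z} (B : Z->Prop) : Z*Z->Prop := fun p => B (fst p) /\ B (snd p).
Definition dg {Z} (H : Z*Z->Prop) : Z -> Prop := fun x => H (x,x).

Lemma Nb_bounded {Z} (C : (Z*Z->Prop)->Prop) B R :
  coarse_structure C -> bounded C B -> C R -> bounded C (Nb B R).
Proof.
  intros cs HB HR.
  set (R' := fun p : Z*Z => diag p \/ R p).
  assert (HR' : C R') by (apply (cs_union cs); [apply (cs_diag cs)|exact HR]).
  apply (cs_sub cs) with (E := comp_rel (comp_rel (inv_rel R') (sq B)) R').
  - apply (cs_comp cs); [apply (cs_comp cs); [apply (cs_inv cs); exact HR'|exact HB]|exact HR'].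
  - intros [x y] [[b1 [Hb1 H1]] [b2 [Hb2 H2]]]. simpl in *.
    exists b2. split.
    + exists b1. split.
      * unfold inv_rel, R', diag; simpl. destruct H1 as [->|H1]; auto.
      * split; assumption.
    + unfold R', diag; simpl. destruct H2 as [->|H2]; auto.
Qed.

Lemma cond_ctrl {Z} (C : (Z*Z->Prop)->Prop) (P : Prop) (E : Z*Z->Prop) :
  coarse_structure C -> (P -> C E) -> C (fun p => P /\ E p).
Proof.
  intros cs H. destruct (classic P) as [HP|HP].
  - apply (cs_sub cs) with (E := E); [auto| intros p [_ Hp]; exact Hp].
  - apply (cs_sub cs) with (E := @diag Z); [apply (cs_diag cs)| intros p [Hp _]; contradiction].
Qed.

Lemma list_ctrl {Z J} (C : (Z*Z->Prop)->Prop) (S : J -> Z*Z -> Prop) :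
  coarse_structure C -> (forall j, C (S j)) ->
  forall l, C (fun q => exists j, In j l /\ S j q).
Proof.
  intros cs HS l. induction l as [|j l IH].
  - apply (cs_sub cs) with (E := @diag Z); [apply (cs_diag cs)| intros p [j [[] _]]].
  - apply (cs_sub cs) with (E := fun q => S j q \/ (exists j', In j' l /\ S j' q)).
    + apply (cs_union cs); auto.
    + intros q [j' [[<-|Hin] Hq]]; [left; exact Hq| right; exists j'; auto].
Qed.

Lemma U_ex {I} (U : (I -> Prop) -> Prop) A : ultrafilter U -> U A -> exists i, A i.
Proof.
  intros uf HA. apply NNPP; intro Hn. apply (uf_proper uf).
  apply (uf_up uf) with (A := A); [exact HA| intros i Hi; apply Hn; exists i; exact Hi].
Qed.

Lemma sat_pick {I K Z} (U : (I -> Prop) -> Prop) (F : Z*Z -> Prop) (S : K -> Z*Z -> Prop) :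
  ultrafilter U -> saturated_for U K ->
  (forall l, exists p, F p /\ forall j, In j l -> ~ S j p) ->
  exists a b : I -> Z, forall j, U (fun i => F (a i, b i) /\ ~ S j (a i, b i)).
Proof.
  intros uf sat Hfin.
  destruct (sat (Z*Z)%type K (fun j => j) (fun a b H => H)
              (fun j i p => F p /\ ~ S j p)) as [z Hz].
  - intro l. destruct (Hfin l) as [p [Fp Hp]]. exists (fun _ => p).
    intros j Hj. apply (uf_up uf) with (A := fun _ => True); [apply (uf_full uf)|].
    intros i _. split; auto.
  - exists (fun i => fst (z i)), (fun i => snd (z i)). intro j.
    apply (uf_up uf) with (A := fun i => F (z i) /\ ~ S j (z i)); [apply Hz|].
    intros i. destruct (z i); simpl; auto.
Qed.

Lemma inf_map {I X Y} (U : (I -> Prop) -> Prop) CX CY (f : X -> Y) :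
  proper_map CX CY f -> forall x, INF U CX x -> INF U CY (starf f x).
Proof.
  intros Hp x Hinf [B [HB Hs]]. apply Hinf.
  exists (fun x => B (f x)). split; [apply Hp; exact HB| exact Hs].
Qed.

Theorem mainTheorem12 (I : Type) (U : (I -> Prop) -> Prop)
  (X Y : Type) (CX : (X * X -> Prop) -> Prop) (CY : (Y * Y -> Prop) -> Prop)
  (f : X -> Y) :
  ultrafilter U ->
  saturated_for U ((X * X -> Prop) + (Y * Y -> Prop)) ->
  coarse_structure CX -> coarse_structure CY ->
  proper_map CX CY f -> bornological CX CY f ->
  (forall x : I -> X, INF U CX x -> INF U CY (starf f x)) /\
  (bornologous CX CY f <-> corona_bornologous U CX CY f) /\
  (eff_proper CX CY f <-> corona_eff_proper U CX CY f).
Proof.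
  intros uf sat csX csY Hpr Hbl.
  assert (P1 := inf_map U CX CY f Hpr).
  split; [exact P1|split; split].
  -
    intros Hb E [E0 [[F [HF Hsub]] Hiff]].
    exists (image2 (starf f) E). split.
    + exists (image2 f F). split; [apply Hb; exact HF|].
      intros q [p [Ep ->]]. apply Hiff in Ep. destruct Ep as [Ep _].
      apply Hsub in Ep. unfold starR in *. simpl.
      apply (uf_up uf) with (A := fun i => F (fst p i, snd p i)); [exact Ep|].
      intros i Hi. exists (fst p i, snd p i). split; auto.
    + intro q. split; [|tauto]. intro Hq. split; [exact Hq|].
      destruct Hq as [p [Ep ->]]. apply Hiff in Ep. simpl. split; apply P1; tauto.
  -
    intros Hcb F HF. apply NNPP; intro Hn.
    set (S2 := fun (j : (X*X->Prop) + (Y*Y->Prop)) (q : Y*Y) =>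
      match j with
      | inl H => bounded CX (dg H) /\
          (sq (img f (Nb (dg H) F)) q \/ sq (img f (Nb (dg H) (inv_rel F))) q)
      | inr G => CY G /\ G q end).
    assert (HS : forall j, CY (S2 j)).
    { intros [H|G]; simpl.
      - apply cond_ctrl; [exact csY|]. intro HB.
        apply (cs_union csY); apply Hbl; apply Nb_bounded; auto.
        apply (cs_inv csX); exact HF.
      - apply cond_ctrl; [exact csY| auto]. }
    destruct (sat_pick U F (fun j p => S2 j (f (fst p), f (snd p))) uf sat) as [a [b Hab]].
    { intro l. apply NNPP; intro Hne. apply Hn.
      apply (cs_sub csY) with (E := fun q => exists j, In j l /\ S2 j q).
      - apply list_ctrl; auto.
      - intros q [p [Fp ->]]. apply NNPP; intro Hq. apply Hne.
        exists p. split; [exact Fp|]. intros j Hj HSj. apply Hq. exists j; auto. }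
    assert (INFa : INF U CX a).
    { intros [B [HB Hs]].
      destruct (U_ex U _ uf (uf_inter uf _ _ (Hab (inl (sq B))) Hs)) as [i [[Fi Si] Bi]].
      apply Si. simpl. split.
      - apply (cs_sub csX) with (E := sq B); [exact HB|].
        intros p [[H1 _] [H2 _]]; split; assumption.
      - left. split; simpl.
        + exists (a i). split; [|reflexivity]. exists (a i). split; [split; assumption| left; reflexivity].
        + exists (b i). split; [|reflexivity]. exists (a i). split; [split; assumption| right; exact Fi]. }
    assert (INFb : INF U CX b).
    { intros [B [HB Hs]].
      destruct (U_ex U _ uf (uf_inter uf _ _ (Hab (inl (sq B))) Hs)) as [i [[Fi Si] Bi]].
      apply Si. simpl. split.
      - apply (cs_sub csX) with (E := sq B); [exact HB|].
        intros p [[H1 _] [H2 _]]; split; assumption.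
      - right. split; simpl.
        + exists (a i). split; [|reflexivity]. exists (b i). split; [split; assumption| right; exact Fi].
        + exists (b i). split; [|reflexivity]. exists (b i). split; [split; assumption| left; reflexivity]. }
    set (E := fun p : (I -> X) * (I -> X) => p = (a, b) /\ INF U CX a /\ INF U CX b).
    assert (HE : corona_controlled U CX E).
    { exists (fun p => p = (a, b)). split.
      - exists F. split; [exact HF|]. intros p ->. unfold starR; simpl.
        apply (uf_up uf) with (A := fun i => F (a i, b i) /\ ~ S2 (inr (fun _ => False)) (f (a i), f (b i)));
          [apply Hab| intros i Hi; apply Hi].
      - intro p. unfold E. split; [intros [-> H]; simpl; tauto| intros [-> H]; simpl in H; tauto]. }
    destruct (Hcb E HE) as [E0 [[G [HG Hsub]] Hiff]].
    assert (Hq : image2 (starf f) E (starf f a, starf f b)).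
    { exists (a, b). split; [unfold E; tauto| reflexivity]. }
    apply Hiff in Hq. destruct Hq as [Hq _]. apply Hsub in Hq.
    destruct (U_ex U _ uf (uf_inter uf _ _ (Hab (inr G)) Hq)) as [i [[_ Si] Gi]].
    apply Si. simpl. split; [exact HG| exact Gi].
  -
    intros He E [E0 [[G [HG Hsub]] Hiff]].
    exists (fun p => INF U CX (fst p) /\ INF U CX (snd p) /\ E (starf f (fst p), starf f (snd p))). split.
    + exists (fun p => G (f (fst p), f (snd p))). split; [apply He; exact HG|].
      intros p [_ [_ Ep]]. apply Hiff in Ep. destruct Ep as [Ep _]. apply Hsub in Ep. exact Ep.
    + intro p. simpl. tauto.
  -
    intros Hcep G HG. apply NNPP; intro Hn.
    set (F := fun p : X * X => G (f (fst p), f (snd p))).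
    set (S3 := fun (j : (X*X->Prop) + (Y*Y->Prop)) (p : X*X) =>
      match j with
      | inl H => (CX H /\ H p) \/ (bounded CX (dg H) /\
          (sq (fun x => Nb (img f (dg H)) G (f x)) p \/
           sq (fun x => Nb (img f (dg H)) (inv_rel G) (f x)) p))
      | inr _ => False end).
    assert (HS : forall j, CX (S3 j)).
    { intros [H|G']; simpl.
      - apply (cs_union csX).
        + apply cond_ctrl; auto.
        + apply cond_ctrl; [exact csX|]. intro HB.
          apply (cs_union csX); apply Hpr; apply Nb_bounded; [exact csY|apply Hbl; exact HB| first [exact HG|apply (cs_inv csY); exact HG] | exact csY|apply Hbl; exact HB| first [exact HG|apply (cs_inv csY); exact HG]].
      - apply (cs_sub csX) with (E := @diag X); [apply (cs_diag csX)| intros p []]. }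
    destruct (sat_pick U F S3 uf sat) as [a [b Hab]].
    { intro l. apply NNPP; intro Hne. apply Hn.
      apply (cs_sub csX) with (E := fun q => exists j, In j l /\ S3 j q).
      - apply list_ctrl; auto.
      - intros p Fp. apply NNPP; intro Hq. apply Hne.
        exists p. split; [exact Fp|]. intros j Hj HSj. apply Hq. exists j; auto. }
    assert (Hbd : forall B, bounded CX B -> bounded CX (dg (sq B))).
    { intros B HB. apply (cs_sub csX) with (E := sq B); [exact HB|].
      intros p [[H1 _] [H2 _]]; split; assumption. }
    assert (INFa : INF U CX a).
    { intros [B [HB Hs]].
      destruct (U_ex U _ uf (uf_inter uf _ _ (Hab (inl (sq B))) Hs)) as [i [[Fi Si] Bi]].
      apply Si. simpl. right. split; [apply Hbd; exact HB|].
      left. split; simpl.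
      + exists (f (a i)). split; [exists (a i); split; [split; assumption|reflexivity]| left; reflexivity].
      + exists (f (a i)). split; [exists (a i); split; [split; assumption|reflexivity]| right; exact Fi]. }
    assert (INFb : INF U CX b).
    { intros [B [HB Hs]].
      destruct (U_ex U _ uf (uf_inter uf _ _ (Hab (inl (sq B))) Hs)) as [i [[Fi Si] Bi]].
      apply Si. simpl. right. split; [apply Hbd; exact HB|].
      right. split; simpl.
      + exists (f (b i)). split; [exists (b i); split; [split; assumption|reflexivity]| right; exact Fi].
      + exists (f (b i)). split; [exists (b i); split; [split; assumption|reflexivity]| left; reflexivity]. }
    set (E := fun q : (I -> Y) * (I -> Y) =>
      q = (starf f a, starf f b) /\ INF U CY (fst q) /\ INF U CY (snd q)).
    assert (HE : corona_controlled U CY E).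
    { exists (fun q => q = (starf f a, starf f b)). split.
      - exists G. split; [exact HG|]. intros q ->. unfold starR; simpl.
        apply (uf_up uf) with (A := fun i => F (a i, b i) /\ ~ S3 (inr (fun _ => False)) (a i, b i));
          [apply Hab| intros i Hi; apply Hi].
      - intro q. unfold E. tauto. }
    destruct (Hcep E HE) as [E0 [[H [HH Hsub]] Hiff]].
    assert (Hp : INF U CX (fst (a, b)) /\ INF U CX (snd (a, b)) /\
                 E (starf f (fst (a, b)), starf f (snd (a, b)))).
    { simpl. split; [exact INFa|split; [exact INFb|]].
      unfold E; simpl. split; [reflexivity| split; apply P1; assumption]. }
    apply Hiff in Hp. destruct Hp as [Hp _]. apply Hsub in Hp.
    destruct (U_ex U _ uf (uf_inter uf _ _ (Hab (inl H)) Hp)) as [i [[_ Si] Hi]].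
    apply Si. simpl. left. split; [exact HH| exact Hi].
Qed.
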